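(* Let $\rho$ be a positive integer and $v$ an integer with $v \ge 9\rho + 31$. Then \[ \beta(\rho,v,4) \le \frac{\rho v}{3} + 5\rho^2 - \frac{16\rho}{3}. \]
   Context: For integers $v \ge k \ge 2$, a $(v,k)$-packing is a pair $(X,\mathcal{B})$ where $X$ is a set of $v$ points and $\mathcal{B}$ is a set of $k$-subsets of $X$ (blocks) such that every pair of distinct points lies in at most one block. A partial parallel class (PPC) is a set of pairwise disjoint blocks; its size is the number of blocks. A PPC of size $\rho$ is maximum if the packing has no PPC of size $\rho+1$. $\beta(\rho,v,k)$ denotes the maximum number of blocks in a $(v,k)$-packing in which the maximum PPC has size $\rho$. *)

(* Defs.v *)
From mathcomp Require Import all_boot all_order all_algebra.
Set Implicit Arguments. Unset Strict Implicit. Unset Printing Implicit Defensive.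

Definition is_packing (v k : nat) (B : {set {set 'I_v}}) : bool :=
  [forall b in B, #|b| == k] &&
  [forall x : 'I_v, forall y : 'I_v,
     (x != y) ==> (#|[set b in B | (x \in b) && (y \in b)]| <= 1)].

Definition is_ppc (v : nat) (B P : {set {set 'I_v}}) : bool :=
  (P \subset B) &&
  [forall b1 in P, forall b2 in P, (b1 != b2) ==> [disjoint b1 & b2]].

Definition max_ppc_size (v : nat) (B : {set {set 'I_v}}) : nat :=
  \max_(P : {set {set 'I_v}} | is_ppc B P) #|P|.

(* beta(rho, v, k): max number of blocks in a (v,k)-packing whose maximum
   PPC has size rho (0 if there is no such packing). *)
Definition beta (rho v k : nat) : nat :=
  \max_(B : {set {set 'I_v}} | is_packing k B && (max_ppc_size B == rho)) #|B|.

(* Main.v *)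
Require Import Defs.
From mathcomp Require Import all_boot all_order all_algebra.
From mathcomp Require Import zify.
Set Implicit Arguments. Unset Strict Implicit. Unset Printing Implicit Defensive.
From mathcomp Require Import ring lra.

Lemma disjointP (T : finType) (A C : {set T}) :
  reflect (forall x, x \in A -> x \in C -> False) [disjoint A & C].
Proof.
rewrite -setI_eq0; apply: (iffP idP).
  by move=> /eqP/setP H x xA xC; move: (H x); rewrite !inE xA xC.
move=> H; apply/eqP/setP => x; rewrite !inE; apply/negP => /andP [xA xC].
exact: (H x).
Qed.

Lemma sum_ind (T : finType) (A : {set T}) (p : pred T) :
  \sum_(i in A) (p i : nat) = #|[set i in A | p i]|.
Proof.
rewrite -sum1_card big_mkcond [RHS]big_mkcond /=; apply: eq_bigr => i _.
by rewrite !inE; case: (i \in A); case: (p i).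
Qed.

Lemma card_setI_sum (T : finType) (A C : {set T}) :
  #|C :&: A| = \sum_(a in A) (a \in C : nat).
Proof.
rewrite sum_ind; apply: eq_card => a; rewrite !inE; exact: andbC.
Qed.

Lemma sum_G (T : finType) (A : {set T}) (N : T -> nat) K :
  (forall y1 y2, y1 \in A -> y2 \in A -> y1 != y2 -> 0 < N y1 -> N y2 <= 3) ->
  (forall y, y \in A -> N y <= K) ->
  \sum_(y in A) N y <= maxn (3 * #|A|) K.
Proof.
move=> H HK.
case: (pickP [pred y in A | 3 < N y]) => [y0 /andP [y0A Ny0]| H3].
  rewrite (bigD1 y0) //= big1 ?addn0.
    by apply: leq_trans (HK _ y0A) _; exact: leq_maxr.
  move=> y /andP [yA yy0]; apply/eqP; rewrite -leqn0 leqNgt; apply/negP => Ny.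
  by have := H y y0 yA y0A yy0 Ny; rewrite leqNgt Ny0.
apply: leq_trans (leq_maxl _ K).
rewrite -sum1_card big_distrr /= muln1; apply: leq_sum => y yA.
by have := H3 y; rewrite /= yA /= => /negbT; rewrite -leqNgt.
Qed.

Section Main.
Variables (v rho : nat) (B P : {set {set 'I_v}}).
Hypothesis Hpack : is_packing 4 B.
Hypothesis HP : is_ppc B P.
Hypothesis HPcard : #|P| = rho.
Hypothesis Hmax : forall Q, is_ppc B Q -> #|Q| <= rho.

Definition U := cover P.

Lemma blk4 C : C \in B -> #|C| = 4.
Proof. by case/andP: Hpack => /forall_inP H _ /H /eqP. Qed.

Lemma pack1 x y : x != y -> #|[set C in B | (x \in C) && (y \in C)]| <= 1.
Proof. by case/andP: Hpack => _ /forallP /(_ x) /forallP /(_ y) /implyP. Qed.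

Lemma pack_uniq x y C1 C2 : x != y -> C1 \in B -> C2 \in B ->
  x \in C1 -> y \in C1 -> x \in C2 -> y \in C2 -> C1 = C2.
Proof.
move=> xy B1 B2 x1 y1 x2 y2.
have := pack1 xy; rewrite leq_eqVlt ltnS leqn0 cards_eq0 => /orP [/cards1P [C0 HC0]| /eqP/setP/(_ C1)].
  have : C1 \in [set C0] by rewrite -HC0 inE B1 x1 y1.
  have : C2 \in [set C0] by rewrite -HC0 inE B2 x2 y2.
  by rewrite !inE => /eqP -> /eqP ->.
by rewrite !inE B1 x1 y1.
Qed.

Lemma PsubB : P \subset B.
Proof. by case/andP: HP. Qed.

Lemma Pdisj b1 b2 : b1 \in P -> b2 \in P -> b1 != b2 -> [disjoint b1 & b2].
Proof.
case/andP: HP => _ /forall_inP H b1P b2P.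
by move: (H b1 b1P) => /forall_inP /(_ b2 b2P) /implyP.
Qed.

Lemma Ptriv : trivIset P.
Proof. by apply/trivIsetP => b1 b2; apply: Pdisj. Qed.

Lemma PsubU b : b \in P -> b \subset U.
Proof. by move=> bP; apply/subsetP => x xb; apply/bigcupP; exists b. Qed.

Lemma Pcard b : b \in P -> #|b| = 4.
Proof. by move=> bP; apply: blk4; apply: (subsetP PsubB). Qed.

Lemma cardU : #|U| = 4 * rho.
Proof.
rewrite -sum1_card /U (big_trivIset _ Ptriv) /=.
rewrite (eq_bigr (fun _ => 4)); last by move=> b bP; rewrite sum1_card Pcard.
by rewrite sum_nat_const HPcard mulnC.
Qed.


Lemma exch (S Q : {set {set 'I_v}}) (X : {set 'I_v}) : S \subset P -> Q \subset B ->
  (forall q1 q2, q1 \in Q -> q2 \in Q -> q1 != q2 -> [disjoint q1 & q2]) ->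
  (forall q, q \in Q -> q :&: U \subset X) ->
  (forall p, p \in P :\: S -> [disjoint p & X]) ->
  #|Q| <= #|S|.
Proof.
move=> SP QB Qdis QX PX.
have key p q : p \in P :\: S -> q \in Q -> [disjoint p & q].
  move=> pPS qQ; apply/disjointP => x xp xq.
  have pP : p \in P by move: pPS; rewrite inE => /andP [].
  have xU : x \in U by apply: (subsetP (PsubU pP)).
  have xX : x \in X by apply: (subsetP (QX q qQ)); rewrite inE xq xU.
  by move/disjointP: (PX p pPS) => /(_ x xp xX).
pose P' := (P :\: S) :|: Q.
have ppc : is_ppc B P'.
  apply/andP; split.
    rewrite subUset QB andbT; apply: subset_trans PsubB; exact: subsetDl.
  apply/forall_inP => b1 b1P; apply/forall_inP => b2 b2P; apply/implyP => b12.
  move: b1P b2P; rewrite !inE => /orP [b1S | b1Q] /orP [b2S | b2Q].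
  - move: b1S b2S => /andP [_ b1P] /andP [_ b2P]; exact: Pdisj.
  - apply: key => //; by rewrite inE.
  - rewrite disjoint_sym; apply: key => //; by rewrite inE.
  - exact: Qdis.
have I0 : (P :\: S) :&: Q = set0.
  apply/setP => q; rewrite !inE; apply/negP => /andP [qPS qQ].
  have := key q q; rewrite inE qPS => /(_ isT qQ).
  rewrite -setI_eq0 setIid => /eqP q0.
  have : #|q| = 4 by apply: blk4; apply: (subsetP QB).
  by rewrite q0 cards0.
have := Hmax ppc; rewrite /P' cardsU I0 cards0 subn0 (cardsDS SP) HPcard.
have : #|S| <= rho by rewrite -HPcard; apply: subset_leq_card.
lia.
Qed.


Lemma meetU C : C \in B -> 0 < #|C :&: U|.
Proof.
move=> CB; rewrite lt0n; apply/negP => /eqP/cards0_eq C0.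
suff : #|[set C]| <= #|(set0 : {set {set 'I_v}})| by rewrite cards1 cards0.
apply: (exch (X := set0)); rewrite ?sub0set ?sub1set //.
- by move=> q1 q2; rewrite !inE => /eqP -> /eqP ->; rewrite eqxx.
- by move=> q; rewrite inE => /eqP ->; rewrite C0 subxx.
- by move=> p _; apply/disjointP => y _; rewrite inE.
Qed.

Lemma DC x (A : {set 'I_v}) (F : {set {set 'I_v}}) :
  x \notin A -> F \subset B -> (forall D, D \in F -> x \in D) ->
  \sum_(D in F) #|D :&: A| <= #|A|.
Proof.
move=> xA FB Fx.
under eq_bigr => D _ do rewrite card_setI_sum.
rewrite exchange_big /= -sum1_card; apply: leq_sum => a aA.
rewrite sum_ind; apply: leq_trans (pack1 (x := x) (y := a) _).
  apply: subset_leq_card; apply/subsetP => D; rewrite !inE => /andP [DF aD].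
  by rewrite (subsetP FB _ DF) Fx.
by apply/negP => /eqP xa; move: xA; rewrite xa aA.
Qed.

Lemma AV x (A : {set 'I_v}) (F : {set {set 'I_v}}) :
  x \notin A -> F \subset B -> (forall D, D \in F -> x \in D) ->
  #|A| < #|F| -> exists2 D, D \in F & [disjoint D & A].
Proof.
move=> xA FB Fx AF.
case: (pickP [pred D in F | [disjoint D & A]]) => [D /andP [DF DA]| H].
  by exists D.
have := DC xA FB Fx.
suff : #|F| <= \sum_(D in F) #|D :&: A| by lia.
rewrite -sum1_card; apply: leq_sum => D DF.
have := H D; rewrite /= DF /= => /negbT; rewrite -setI_eq0 => /set0Pn [y yDA].
by rewrite card_gt0; apply/set0Pn; exists y.
Qed.

Definition Dset x := [set C in B | C :&: U == [set x]].
Definition d x := #|Dset x|.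

Lemma DsetP x C : C \in Dset x -> [/\ C \in B, x \in C & C :&: U = [set x]].
Proof.
rewrite inE => /andP [CB /eqP CU]; split => //.
have : x \in C :&: U by rewrite CU set11.
by rewrite inE => /andP [].
Qed.

Lemma DsetB x : Dset x \subset B.
Proof. by apply/subsetP => C /DsetP []. Qed.

Lemma Dsetx x D : D \in Dset x -> x \in D.
Proof. by case/DsetP. Qed.

Lemma d3 x : x \in U -> 3 * d x <= #|~: U|.
Proof.
move=> xU.
have := DC (x := x) (A := ~: U) (F := Dset x).
rewrite inE xU => /(_ isT (DsetB x) (@Dsetx x)).
rewrite (eq_bigr (fun _ => 3)) ?sum_nat_const /d 1?mulnC //.
move=> D /DsetP [DB _ DU].
rewrite -setDE; have := cardsID U D; rewrite (blk4 DB) DU cards1; lia.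
Qed.


Lemma disj_neq (C D : {set 'I_v}) : C \in B -> [disjoint C & D] -> C != D.
Proof.
move=> CB CD; apply/negP => /eqP CeD; move: CD; rewrite -CeD -setI_eq0 setIid => /eqP C0.
by have := blk4 CB; rewrite C0 cards0.
Qed.

Lemma E2 (b C D : {set 'I_v}) : b \in P -> C \in B -> D \in B -> [disjoint C & D] ->
  C :&: U \subset b -> D :&: U \subset b -> False.
Proof.
move=> bP CB DB CD CU DU.
suff : #|[set C; D]| <= #|[set b]| by rewrite cards1 cards2 (disj_neq CB CD).
apply: (exch (X := b)).
- by rewrite sub1set.
- by apply/subsetP => q; rewrite !inE => /orP [] /eqP ->.
- move=> q1 q2; rewrite !inE => /orP [] /eqP -> /orP [] /eqP ->; rewrite ?eqxx //.
  by rewrite disjoint_sym.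
- by move=> q; rewrite !inE => /orP [] /eqP ->.
- move=> p; rewrite !inE => /andP [pb pP]; exact: Pdisj.
Qed.

Lemma in3 (T : finType) (C D E q : T) : q \in [set C; D; E] -> [\/ q = C, q = D | q = E].
Proof. by rewrite !inE => /orP [/orP [] | ] /eqP ->; [constructor 1 | constructor 2 | constructor 3]. Qed.

Lemma E3 (b b' C D E : {set 'I_v}) : b \in P -> b' \in P -> b != b' ->
  C \in B -> D \in B -> E \in B ->
  [disjoint C & D] -> [disjoint C & E] -> [disjoint D & E] ->
  C :&: U \subset b :|: b' -> D :&: U \subset b :|: b' -> E :&: U \subset b :|: b' ->
  False.
Proof.
move=> bP b'P bb' CB DB EB CD CE DE CU DU EU.
suff : #|[set C; D; E]| <= #|[set b; b']|.
  rewrite cards2 bb' setUC cardsU1 cards2 (disj_neq CB CD) !inE negb_or [E == C]eq_sym [E == D]eq_sym (disj_neq CB CE) (disj_neq DB DE).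
  by [].
apply: (exch (X := b :|: b')).
- by apply/subsetP => q; rewrite !inE => /orP [] /eqP ->.
- by apply/subsetP => q /in3 [] ->.
- move=> q1 q2 /in3 [] -> /in3 [] ->; rewrite ?eqxx //;
  by rewrite disjoint_sym.
- by move=> q /in3 [] ->.
- move=> p; rewrite !inE negb_or => /andP [/andP [pb pb'] pP].
  apply/disjointP => y yp; rewrite inE => /orP [yb | yb'].
    by move/disjointP: (Pdisj pP bP pb) => /(_ y yp yb).
  by move/disjointP: (Pdisj pP b'P pb') => /(_ y yp yb').
Qed.


Lemma notinD (D S : {set 'I_v}) z : D :&: U = S -> z \in U -> z \notin S -> z \notin D.
Proof.
move=> DU zU zS; apply/negP => zD; move/negP: zS; apply.
by rewrite -DU inE zD zU.
Qed.

Lemma L1 (b : {set 'I_v}) x y : b \in P -> x \in b -> y \in b -> x != y -> 0 < d y -> 4 <= d x -> False.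
Proof.
move=> bP xb yb xy dy dx.
have xU : x \in U by apply: (subsetP (PsubU bP)).
have yU : y \in U by apply: (subsetP (PsubU bP)).
move: dy; rewrite card_gt0 => /set0Pn [C /DsetP [CB yC CU]].
have xC : x \notin C by apply: (notinD CU xU); rewrite inE.
have xA : x \notin C :\ y by rewrite inE (negbTE xC) andbF.
have cA : #|C :\ y| < #|Dset x| by have := cardsD1 y C; rewrite yC blk4 // /d in dx *; lia.
have [D Dx DC] := AV xA (DsetB x) (@Dsetx x) cA.
have [DB xD DU] := DsetP Dx.
have yD : y \notin D by apply: (notinD DU yU); rewrite inE eq_sym.
apply: (E2 bP CB DB) ; last 2 first.
- by rewrite CU sub1set.
- by rewrite DU sub1set.
apply/disjointP => z zC zD.
case: (eqVneq z y) => [zy | zy]; first by move: yD; rewrite -zy zD.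
by move/disjointP: DC => /(_ z zD); rewrite !inE zy zC; apply.
Qed.


Definition s (b : {set 'I_v}) := \sum_(x in b) d x.
Definition bigb (b : {set 'I_v}) := [exists x in b, 12 <= d x].
Definition w := #|~: U|.

Lemma sbound (b : {set 'I_v}) : b \in P -> 36 + 5 * (rho - 1) <= w ->
  6 * s b + 10 * (rho - 1) * (~~ bigb b) <= 2 * w.
Proof.
move=> bP hw.
have HG : forall y1 y2, y1 \in b -> y2 \in b -> y1 != y2 -> 0 < d y1 -> d y2 <= 3.
  move=> y1 y2 y1b y2b y12 dy1; rewrite leqNgt; apply/negP => dy2.
  by apply: (L1 bP y2b y1b _ dy1 dy2); rewrite eq_sym.
have cb : #|b| = 4 by apply: Pcard.
case: (boolP (bigb b)) => hb /=.
  have := @sum_G _ b d (w %/ 3) HG.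
  have H : forall y, y \in b -> d y <= w %/ 3.
    move=> y yb; rewrite leq_divRL // mulnC; apply: d3.
    exact: (subsetP (PsubU bP)).
  move/(_ H); rewrite cb -/(s b) => hs.
  have := leq_divM w 3; lia.
have H : forall y, y \in b -> d y <= 11.
  move=> y yb; move: hb; rewrite negb_exists => /forallP /(_ y).
  by rewrite yb /= -ltnNge ltnS.
have := @sum_G _ b d 11 HG H; rewrite cb -/(s b); lia.
Qed.


Definition cov y z := [exists C in B, C :&: U == [set y; z]].
Definition blk y z := odflt set0 [pick C in B | C :&: U == [set y; z]].
Definition Nf (b' : {set 'I_v}) y := #|[set z in b' | cov y z]|.
Definition n2 (b b' : {set 'I_v}) := \sum_(y in b) Nf b' y.

Lemma blkP y z : cov y z -> blk y z \in B /\ blk y z :&: U = [set y; z].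
Proof.
rewrite /blk; case: pickP => [C /andP [CB /eqP CU] | H] //.
by case/exists_inP => C CB CU; move: (H C); rewrite /= CB CU.
Qed.

Lemma set2C (T : finType) (y z : T) : [set y; z] = [set z; y].
Proof. by apply/setP => t; rewrite !inE orbC. Qed.

Lemma covC y z : cov y z = cov z y.
Proof. by rewrite /cov set2C. Qed.

Lemma neqPP (b b' : {set 'I_v}) p q : b \in P -> b' \in P -> b != b' -> p \in b -> q \in b' -> p != q.
Proof.
move=> bP b'P bb' pb qb'; apply/negP => /eqP pq.
by move/disjointP: (Pdisj bP b'P bb') => /(_ p pb); rewrite pq => /(_ qb').
Qed.

Lemma inPU (b : {set 'I_v}) p : b \in P -> p \in b -> p \in U.
Proof. by move=> bP pb; apply: (subsetP (PsubU bP)). Qed.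

Lemma disj_from (C D : {set 'I_v}) y : [disjoint D & C :\ y] -> y \notin D -> [disjoint C & D].
Proof.
move=> DC yD; apply/disjointP => z zC zD.
case: (eqVneq z y) => [zy | zy]; first by move: yD; rewrite -zy zD.
by move/disjointP: DC => /(_ z zD); rewrite !inE zy zC; apply.
Qed.

Lemma disjU (C D E : {set 'I_v}) : [disjoint E & C :|: D] -> [disjoint C & E] /\ [disjoint D & E].
Proof.
move/disjointP => H; split; apply/disjointP => z z1 z2; apply: (H z z2); by rewrite inE z1 ?orbT.
Qed.

Lemma card2U (C D : {set 'I_v}) : C \in B -> D \in B -> #|C :|: D| <= 8.
Proof. move=> CB DB; rewrite cardsU (blk4 CB) (blk4 DB); lia. Qed.

Lemma L2 (b b' : {set 'I_v}) x y1 y2 : b \in P -> b' \in P -> b != b' ->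
  x \in b -> 12 <= d x -> y1 \in b -> y2 \in b -> y1 != y2 -> y1 != x -> y2 != x ->
  0 < Nf b' y1 -> Nf b' y2 <= 3.
Proof.
move=> bP b'P bb' xb dx y1b y2b y12 y1x y2x N1.
rewrite leqNgt; apply/negP => N2.
have b'b : b' != b by rewrite eq_sym.
move: N1; rewrite card_gt0 => /set0Pn [z]; rewrite inE => /andP [zb' cz].
have [CB CU] := blkP cz; set C := blk y1 z in CB CU.
pose Z := [set z' in b' | cov y2 z'].
pose F := blk y2 @: Z.
have cF : #|F| = #|Z|.
  apply: card_in_imset => z1 z2; rewrite !inE => /andP [z1b cz1] /andP [z2b cz2] e.
  have [_ U1] := blkP cz1; have [_ U2] := blkP cz2.
  have : z1 \in [set y2; z2] by rewrite -U2 -e U1 !inE eqxx orbT.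
  by rewrite !inE (negbTE (neqPP b'P bP b'b z1b y2b)) /= => /eqP.
have FB : F \subset B by apply/subsetP => D /imsetP [z' z'Z ->]; move: z'Z; rewrite inE => /andP [_ /blkP []].
have Fy2 : forall D, D \in F -> y2 \in D.
  move=> D /imsetP [z' z'Z ->]; move: z'Z; rewrite inE => /andP [_ /blkP [_ DU]].
  have : y2 \in [set y2; z'] by rewrite !inE eqxx.
  by rewrite -DU inE => /andP [].
have sub2 : forall p q, p \in b :|: b' -> q \in b :|: b' -> [set p; q] \subset b :|: b'.
  by move=> p q pb qb; apply/subsetP => t; rewrite in_set2 => /orP [] /eqP ->.
have y2C : y2 \notin C.
  apply: (notinD CU (inPU bP y2b)).
  by rewrite !inE negb_or eq_sym y12 (neqPP bP b'P bb' y2b zb').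
have xA : y2 \notin C :\ y1 by rewrite inE (negbTE y2C) andbF.
have y1C : y1 \in C.
  have : y1 \in C :&: U by rewrite CU !inE eqxx.
  by rewrite inE => /andP [].
have cA : #|C :\ y1| < #|F|.
  rewrite cF; have := cardsD1 y1 C; rewrite y1C (blk4 CB) add1n.
  have NZ : Nf b' y2 = #|Z| by [].
  rewrite NZ in N2; move=> [<-]; exact: N2.
have [D DF DC] := AV xA FB Fy2 cA.
move: DF => /imsetP [z' z'Z DE]; move: z'Z; rewrite inE => /andP [z'b cz'].
have [DB DU] := blkP cz'; rewrite -DE in DB DU.
have y1D : y1 \notin D.
  apply: (notinD DU (inPU bP y1b)).
  by rewrite !inE negb_or y12 (neqPP bP b'P bb' y1b z'b).
have CD := disj_from DC y1D.
have xC : x \notin C.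
  apply: (notinD CU (inPU bP xb)).
  by rewrite !inE negb_or eq_sym y1x (neqPP bP b'P bb' xb zb').
have xD : x \notin D.
  apply: (notinD DU (inPU bP xb)).
  by rewrite !inE negb_or eq_sym y2x (neqPP bP b'P bb' xb z'b).
have xA' : x \notin C :|: D by rewrite inE negb_or xC xD.
have cA' : #|C :|: D| < #|Dset x| by apply: leq_ltn_trans (card2U CB DB) (leq_trans _ dx).
have [E Ex EA] := AV xA' (DsetB x) (@Dsetx x) cA'.
have [EB _ EU] := DsetP Ex.
have [CE DE'] := disjU EA.
apply: (E3 bP b'P bb' CB DB EB CD CE DE').
- by rewrite CU sub2 // inE ?y1b ?zb' ?orbT.
- by rewrite DU sub2 // inE ?y2b ?z'b ?orbT.
- by rewrite EU sub1set inE xb.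
Qed.



Lemma P1 (b b' : {set 'I_v}) x x' y z : b \in P -> b' \in P -> b != b' ->
  x \in b -> x' \in b' -> 12 <= d x -> 12 <= d x' -> y \in b -> z \in b' ->
  cov y z -> y != x -> z = x'.
Proof.
move=> bP b'P bb' xb x'b' dx dx' yb zb' cz yx.
have b'b : b' != b by rewrite eq_sym.
case: (eqVneq z x') => // zx'; exfalso.
have [CB CU] := blkP cz; set C := blk y z in CB CU.
have sub2 : forall p q, p \in b :|: b' -> q \in b :|: b' -> [set p; q] \subset b :|: b'.
  by move=> p q pb qb; apply/subsetP => t; rewrite in_set2 => /orP [] /eqP ->.
have x'C : x' \notin C.
  apply: (notinD CU (inPU b'P x'b')).
  by rewrite !inE negb_or (neqPP b'P bP b'b x'b' yb) eq_sym zx'.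
have cA : #|C| < #|Dset x'| by rewrite (blk4 CB); apply: leq_trans dx'.
have [D' D'x D'C] := AV x'C (DsetB x') (@Dsetx x') cA.
have [D'B _ D'U] := DsetP D'x.
have xC : x \notin C.
  apply: (notinD CU (inPU bP xb)).
  by rewrite !inE negb_or eq_sym yx (neqPP bP b'P bb' xb zb').
have xD' : x \notin D'.
  apply: (notinD D'U (inPU bP xb)).
  by rewrite !inE (neqPP bP b'P bb' xb x'b').
have xA' : x \notin C :|: D' by rewrite inE negb_or xC xD'.
have cA' : #|C :|: D'| < #|Dset x| by apply: leq_ltn_trans (card2U CB D'B) (leq_trans _ dx).
have [E Ex EA] := AV xA' (DsetB x) (@Dsetx x) cA'.
have [EB _ EU] := DsetP Ex.
have [CE D'E] := disjU EA.
apply: (E3 bP b'P bb' CB D'B EB _ CE D'E).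
- by rewrite disjoint_sym.
- by rewrite CU sub2 // inE ?yb ?zb' ?orbT.
- by rewrite D'U sub1set inE x'b' orbT.
- by rewrite EU sub1set inE xb.
Qed.


Lemma Nf_le (b' : {set 'I_v}) y : b' \in P -> Nf b' y <= 4.
Proof.
move=> b'P; rewrite -(Pcard b'P); apply: subset_leq_card.
by apply/subsetP => z; rewrite inE => /andP [].
Qed.

Lemma n2_16 (b b' : {set 'I_v}) : b \in P -> b' \in P -> n2 b b' <= 16.
Proof.
move=> bP b'P; rewrite /n2.
apply: (@leq_trans (\sum_(y in b) 4)); first by apply: leq_sum => y _; exact: Nf_le.
by rewrite sum_nat_const Pcard.
Qed.

Lemma sum_split_x (b : {set 'I_v}) x (F : 'I_v -> nat) : x \in b ->
  \sum_(y in b) F y = F x + \sum_(y in b :\ x) F y.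
Proof.
move=> xb; rewrite (bigD1 x) //=; congr (_ + _).
by apply: eq_bigl => y; rewrite !inE andbC.
Qed.

Lemma n2_13 (b b' : {set 'I_v}) x : b \in P -> b' \in P -> b != b' ->
  x \in b -> 12 <= d x -> n2 b b' <= 13.
Proof.
move=> bP b'P bb' xb dx; rewrite /n2 (sum_split_x _ xb).
have c3 : #|b :\ x| = 3 by have := cardsD1 x b; rewrite xb Pcard //; lia.
have := @sum_G _ (b :\ x) (Nf b') 4.
rewrite c3 => H.
have H' : \sum_(y in b :\ x) Nf b' y <= 9.
  apply: leq_trans (H _ _) _ => //.
  - move=> y1 y2; rewrite !inE => /andP [y1x y1b] /andP [y2x y2b] y12.
    exact: (L2 bP b'P bb' xb dx y1b y2b y12 y1x y2x).
  - by move=> y _; apply: Nf_le.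
have := Nf_le x b'P; lia.
Qed.

Lemma n2_8 (b b' : {set 'I_v}) x x' : b \in P -> b' \in P -> b != b' ->
  x \in b -> x' \in b' -> 12 <= d x -> 12 <= d x' -> n2 b b' <= 8.
Proof.
move=> bP b'P bb' xb x'b' dx dx'; rewrite /n2 (sum_split_x _ xb).
have c3 : #|b :\ x| = 3 by have := cardsD1 x b; rewrite xb Pcard //; lia.
have H' : \sum_(y in b :\ x) Nf b' y <= 3.
  rewrite -c3 -sum1_card; apply: leq_sum => y; rewrite !inE => /andP [yx yb].
  rewrite -(cards1 x'); apply: subset_leq_card; apply/subsetP => z.
  rewrite !inE => /andP [zb' cz]; apply/eqP.
  exact: (P1 bP b'P bb' xb x'b' dx dx' yb zb' cz yx).
have := Nf_le x b'P; lia.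
Qed.

Lemma n2C (b b' : {set 'I_v}) : n2 b b' = n2 b' b.
Proof.
rewrite /n2 /Nf.
under eq_bigr => y _ do rewrite -(sum_ind b' (cov y)).
under [RHS]eq_bigr => y _ do rewrite -(sum_ind b (cov y)).
rewrite exchange_big /=; apply: eq_bigr => z _; apply: eq_bigr => y _.
by rewrite covC.
Qed.

Lemma pairb (b b' : {set 'I_v}) : b \in P -> b' \in P -> b != b' ->
  16 + 2 * n2 b b' <= 38 + 5 * (~~ bigb b) + 5 * (~~ bigb b').
Proof.
move=> bP b'P bb'.
have b'b : b' != b by rewrite eq_sym.
case: (boolP (bigb b)) => [/exists_inP [x xb dx] | hb];
  case: (boolP (bigb b')) => [/exists_inP [x' x'b' dx'] | hb'] /=.
- have := n2_8 bP b'P bb' xb x'b' dx dx'; lia.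
- have := n2_13 bP b'P bb' xb dx; lia.
- have := n2_13 b'P bP b'b x'b' dx'; rewrite n2C; lia.
- have := n2_16 bP b'P; lia.
Qed.


Lemma pairs_count (U0 S : {set 'I_v}) :
  \sum_(y in U0) \sum_(z in U0) ((y \in S) && (z \in S) && (y != z) : nat)
  = #|S :&: U0| * (#|S :&: U0| - 1).
Proof.
transitivity (\sum_(y in U0) ((y \in S) * (#|S :&: U0| - 1))).
  apply: eq_bigr => y yU; case yS: (y \in S) => /=.
    rewrite mul1n sum_ind.
    have -> : [set z in U0 | (z \in S) && (y != z)] = (S :&: U0) :\ y.
      by apply/setP => z; rewrite !inE [y == z]eq_sym; case: (z \in U0); case: (z \in S); case: (z == y).
    have := cardsD1 y (S :&: U0); rewrite inE yS yU /= => ->; by rewrite add1n subn1.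
  by rewrite mul0n big1.
rewrite -big_distrl /= sum_ind; congr (_ * _); apply: eq_card => y; rewrite !inE andbC.
by [].
Qed.

Definition T1 := [set C in B | #|C :&: U| == 1].
Definition T2 := [set C in B | (C \notin P) && (2 <= #|C :&: U|)].
Definition f (C : {set 'I_v}) := if #|C :&: U| == 2 then 3 else 1.
Definition G y z := \sum_(C in T2) f C * ((y \in C) && (z \in C) && (y != z)).

Lemma cardU_le (T : finType) (A C : {set T}) : #|A :|: C| <= #|A| + #|C|.
Proof. by rewrite cardsU leq_subr. Qed.

Lemma Bsplit : #|B| <= #|P| + #|T1| + #|T2|.
Proof.
apply: (@leq_trans #|P :|: T1 :|: T2|).
  apply: subset_leq_card; apply/subsetP => C CB; rewrite !inE CB /=.
  case: (boolP (C \in P)) => //= CP.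
  have := meetU CB; case: (#|C :&: U|) => [|[|n]] //.
apply: leq_trans (cardU_le _ _) _; rewrite leq_add2r; exact: cardU_le.
Qed.

Lemma sumU (F : 'I_v -> nat) : \sum_(x in U) F x = \sum_(b in P) \sum_(x in b) F x.
Proof. exact: (big_trivIset _ Ptriv). Qed.

Lemma T1bound : #|T1| <= \sum_(b in P) s b.
Proof.
rewrite /s -sumU.
apply: (@leq_trans (\sum_(C in T1) \sum_(x in U) (C \in Dset x : nat))).
  rewrite -sum1_card; apply: leq_sum => C; rewrite inE => /andP [CB /cards1P [x Cx]].
  have xU : x \in U.
    have : x \in C :&: U by rewrite Cx set11.
    by rewrite inE => /andP [].
  rewrite (bigD1 x) //= inE CB Cx eqxx /=; exact: leq_addr.
rewrite exchange_big /=; apply: leq_sum => x _.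
rewrite sum_ind; apply: subset_leq_card; apply/subsetP => C; rewrite inE => /andP [].
by [].
Qed.


Lemma G_same (b : {set 'I_v}) y z : b \in P -> y \in b -> z \in b -> G y z = 0.
Proof.
move=> bP yb zb; rewrite /G big1 // => C; rewrite inE => /andP [CB /andP [CP _]].
case: (boolP ((y \in C) && (z \in C) && (y != z))) => [/andP [/andP [yC zC] yz] | _];
  last by rewrite muln0.
have bB : b \in B by apply: (subsetP PsubB).
have Cb := pack_uniq yz CB bB yC zC yb zb.
by move: CP; rewrite Cb bP.
Qed.

Lemma G_le y z : y \in U -> z \in U -> G y z <= 1 + 2 * cov y z.
Proof.
move=> yU zU.
case: (eqVneq y z) => [-> | yz].
  by rewrite /G big1 // => C _; rewrite eqxx andbF muln0.
case: (pickP [pred C in T2 | (y \in C) && (z \in C)]) => [C0 /andP [C0T /andP [yC0 zC0]] | H].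
  have C0B : C0 \in B by move: C0T; rewrite inE => /andP [].
  rewrite /G (bigD1 C0) //= big1 ?addn0.
    rewrite yC0 zC0 yz muln1 /f; case: ifP => // t2.
    suff -> : cov y z by [].
    apply/exists_inP; exists C0 => //; rewrite eq_sym eqEcard; apply/andP; split.
      by apply/subsetP => t; rewrite in_set2 => /orP [] /eqP ->; rewrite inE ?yC0 ?zC0 ?yU ?zU.
    by rewrite cards2 yz (eqP t2).
  move=> C /andP [CT CC0].
  case: (boolP ((y \in C) && (z \in C) && (y != z))) => [/andP [/andP [yC zC] _] | _];
    last by rewrite muln0.
  have CB : C \in B by move: CT; rewrite inE => /andP [].
  by move: CC0; rewrite (pack_uniq yz CB C0B yC zC yC0 zC0) eqxx.
rewrite /G big1 // => C CT.
by have := H C; rewrite /= CT /= => ->; rewrite andFb muln0.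
Qed.

Lemma T2bound : 6 * #|T2| <= \sum_(b in P) \sum_(b' in P | b' != b) (16 + 2 * n2 b b').
Proof.
apply: (@leq_trans (\sum_(C in T2) f C * (#|C :&: U| * (#|C :&: U| - 1)))).
  rewrite -sum1_card big_distrr /=; apply: leq_sum => C; rewrite inE => /andP [_ /andP [_]].
  rewrite /f; move: (#|C :&: U|) => t t2; case: ifP => [/eqP -> // | /negbT tn2].
  have t3 : 3 <= t by rewrite ltn_neqAle eq_sym tn2 t2.
  nia.
apply: (@leq_trans (\sum_(y in U) \sum_(z in U) G y z)).
  apply: eq_leq; rewrite /G.
  under eq_bigr => C _ do rewrite -pairs_count big_distrr /=.
  under eq_bigr => C _ do under eq_bigr => y _ do rewrite big_distrr /=.
  rewrite exchange_big /=; apply: eq_bigr => y _.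
  by rewrite exchange_big.
rewrite sumU; apply: leq_sum => b bP.
apply: (@leq_trans (\sum_(y in b) \sum_(b' in P | b' != b) \sum_(z in b') (1 + 2 * cov y z))).
  apply: leq_sum => y yb; rewrite sumU (bigD1 b) //=.
  rewrite big1 ?add0n; last by move=> z zb; apply: (G_same bP yb zb).
  apply: leq_sum => b' /andP [b'P _]; apply: leq_sum => z zb'.
  by apply: G_le; [apply: (inPU bP yb) | apply: (inPU b'P zb')].
rewrite exchange_big /=; apply: eq_leq; apply: eq_bigr => b' /andP [b'P _].
under eq_bigr => y _ do rewrite big_split /= sum_nat_const (Pcard b'P) -big_distrr /= sum_ind.
by rewrite big_split /= sum_nat_const (Pcard bP) -big_distrr.
Qed.


Lemma main_bound : 0 < rho -> 9 * rho + 31 <= v -> 6 * #|B| + 32 * rho <= 2 * rho * v + 30 * rho ^ 2.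
Proof.
move=> rpos hv.
have hw : w + 4 * rho = v by rewrite /w -cardU addnC cardsC card_ord.
have hw' : 36 + 5 * (rho - 1) <= w by lia.
pose nb b := (~~ bigb b : nat).
pose M := \sum_(b in P) nb b.
pose SS := \sum_(b in P) s b.
pose X := \sum_(b in P) \sum_(b' in P | b' != b) (38 + 5 * nb b + 5 * nb b').
have e3 : 6 * #|B| <= 6 * rho + 6 * SS + X.
  have h1 := Bsplit; have h2 := T1bound; have h3 := T2bound.
  have h4 : \sum_(b in P) \sum_(b' in P | b' != b) (16 + 2 * n2 b b') <= X.
    apply: leq_sum => b bP; apply: leq_sum => b' /andP [b'P bb'].
    by apply: pairb; rewrite // eq_sym.
  rewrite -/SS in h2; rewrite HPcard in h1; lia.
have e2 : 6 * SS + 10 * (rho - 1) * M <= 2 * w * rho.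
  rewrite /SS /M !big_distrr /= -big_split /=.
  apply: (@leq_trans (\sum_(b in P) 2 * w)).
    by apply: leq_sum => b bP; apply: sbound.
  by rewrite sum_nat_const HPcard mulnC.
have e1 : X + (38 * rho + 10 * M) = 38 * rho * rho + 10 * rho * M.
  have per : forall b, b \in P ->
      \sum_(b' in P | b' != b) (38 + 5 * nb b + 5 * nb b') + (38 + 10 * nb b)
      = 38 * rho + 5 * rho * nb b + 5 * M.
    move=> b bP.
    have E : \sum_(b' in P) (38 + 5 * nb b + 5 * nb b') =
       (38 + 5 * nb b + 5 * nb b) + \sum_(b' in P | b' != b) (38 + 5 * nb b + 5 * nb b').
      by rewrite (bigD1 b).
    move: E; rewrite big_split /= big_split /= !sum_nat_const HPcard -big_distrr /= -/M => E.
    lia.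
  have S1 : \sum_(b in P) (\sum_(b' in P | b' != b) (38 + 5 * nb b + 5 * nb b') + (38 + 10 * nb b))
       = \sum_(b in P) (38 * rho + 5 * rho * nb b + 5 * M).
    by apply: eq_bigr => b bP; apply: per.
  have A0 : \sum_(b in P) (\sum_(b' in P | b' != b) (38 + 5 * nb b + 5 * nb b') + (38 + 10 * nb b))
       = X + \sum_(b in P) (38 + 10 * nb b) by rewrite big_split.
  have A1 : \sum_(b in P) (38 + 10 * nb b) = 38 * rho + 10 * M.
    by rewrite big_split sum_nat_const -big_distrr HPcard mulnC.
  have A2 : \sum_(b in P) (38 * rho + 5 * rho * nb b + 5 * M) = 38 * rho * rho + 10 * rho * M.
    rewrite big_split big_split !sum_nat_const -big_distrr HPcard -/M /=; lia.
  lia.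
move: e1 e2 e3 hw.
move: (#|B|) SS X M w => nB SS' X' M' w' e1 e2 e3 hw0.
have [r er] : exists r, rho = r.+1 by exists rho.-1; lia.
rewrite er subSS subn0 in e1 e2 e3 hw0 *.
rewrite -hw0.
nia.
Qed.

End Main.

Lemma beta_nat (rho v : nat) : 0 < rho -> 9 * rho + 31 <= v ->
  6 * beta rho v 4 + 32 * rho <= 2 * rho * v + 30 * rho ^ 2.
Proof.
move=> rpos hv.
have key : forall B : {set {set 'I_v}}, is_packing 4 B && (max_ppc_size B == rho) ->
    6 * #|B| + 32 * rho <= 2 * rho * v + 30 * rho ^ 2.
  move=> B /andP [Hp /eqP Hm].
  have ppc0 : is_ppc B set0.
    by rewrite /is_ppc sub0set; apply/forall_inP => ?; rewrite inE.
  case: (@arg_maxnP _ set0 (is_ppc B) (fun P => #|P|) ppc0) => P0 HP0 Hmax0.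
  have HPc : #|P0| = rho.
    rewrite -Hm /max_ppc_size; apply/eqP; rewrite eqn_leq; apply/andP; split.
      by apply: leq_bigmax_cond.
    by apply/bigmax_leqP => Q HQ; exact: Hmax0.
  apply: (main_bound Hp HP0 HPc _ rpos hv).
  by move=> Q HQ; rewrite -HPc; exact: Hmax0.
pose N := 2 * rho * v + 30 * rho ^ 2 - 32 * rho.
have hb : beta rho v 4 <= N %/ 6.
  apply/bigmax_leqP => B HB; rewrite leq_divRL //; have := key B HB; rewrite /N; lia.
have h32 : 32 * rho <= 2 * rho * v + 30 * rho ^ 2 by nia.
have := leq_divM N 6; rewrite /N in hb *; lia.
Qed.

Unset Implicit Arguments.
Import GRing.Theory Num.Theory.
Local Open Scope ring_scope.

Theorem theorem3p12 (rho v : nat) :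
  (0 < rho)%N -> (9 * rho + 31 <= v)%N ->
  ((beta rho v 4)%:R : rat)
    <= (rho%:R * v%:R) / 3%:R + 5%:R * rho%:R ^+ 2 - 16%:R * rho%:R / 3%:R.
Proof.
move=> rpos hv.
have H := beta_nat rpos hv.
have H' : ((6 * beta rho v 4 + 32 * rho)%:R : rat) <= (2 * rho * v + 30 * rho ^ 2)%:R.
  by rewrite ler_nat.
rewrite !natrD natrX !natrM in H'.
move: H'; move: (beta rho v 4)%:R (rho%:R : rat) (v%:R : rat) => b r w H'.
lra.
Qed.
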